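(* Let $K=\{k_0,k_1,\dots,k_n\}$ be a finite set of alternatives, $K_*=K\setminus\{k_0\}$, $T_1=\{t_1^a,t_1^b\}$, $T_2$ a finite set, $T=T_1\times T_2$, and $\lambda$ a probability measure on $T$ with $\lambda(t)>0$ for all $t$, equal to the product of its marginals $\lambda_1,\lambda_2$. Let real numbers $Q_i^k(t_i)$ ($k\in K_*$) be given, put $Q_i^{k_0}(t_i)=1-\sum_{k\in K_*}Q_i^k(t_i)$, $h_i^k(t_i)=Q_i^k(t_i)\lambda_i(t_i)$ for all $k\in K$, and assume $\sum_{t_1\in T_1}h_1^k(t_1)=\sum_{t_2\in T_2}h_2^k(t_2)$ for all $k\in K_*$. Let $P_{\mathcal I}$ denote the system: $x^k:T\to\mathbb{R}_{\ge 0}$ ($k\in K$) with $\sum_{t_{-i}}x^k(t)=h_i^k(t_i)$ for all $k\in K_*$, $t_i\in T_i$, $i=1,2$, and $\sum_{k\in K}x^k(t)=\lambda(t)$ for all $t\in T$. Let $P(t_1^a)$ denote the system: $x^k:T\to\mathbb{R}_{\ge0}$ ($k\in K$) with $$\sum_{t_{-i}\in T_{-i}}x^k(t)=h_i^k(t_i)\ \text{ for all }(k,t_i)\in K\times\big(T_2\cup\{t_1^b\}\big),\qquad \sum_{k\in K}x^k(t_1^a,t_2)=\lambda(t_1^a,t_2)\ \text{ for all }t_2\in T_2.$$ Then: (1) $P_{\mathcal I}$ has a feasible solution if and only if $P(t_1^a)$ has a feasible solution. (2) $P(t_1^a)$ is a network flow problem on the bipartite graph with supply nodes $V_1=K\times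 T_2$ and demand nodes $V_2=(K\times\{t_1^b\})\cup(\{t_1^a\}\times T_2)$, with an arc from each $(k,t_2)$ to $(k,t_1^b)$ (carrying flow $x^k(t_1^b,t_2)$) and an arc from each $(k,t_2)$ to $(t_1^a,t_2)$ (carrying flow $x^k(t_1^a,t_2)$), supply $h_2^k(t_2)$ at $(k,t_2)$, demand $h_1^k(t_1^b)$ at $(k,t_1^b)$ and demand $\lambda(t_1^a,t_2)$ at $(t_1^a,t_2)$: $P(t_1^a)$ has a feasible solution if and only if there is a non-negative flow on these arcs whose total outflow at each supply node equals its supply and whose total inflow at each demand node equals its demand.
   Context: Here $-i$ denotes the player other than $i$ and $t=(t_i,t_{-i})$. *)

(* Defs.v *)
From mathcomp Require Import all_boot all_order all_algebra.
Set Implicit Arguments. Unset Strict Implicit. Unset Printing Implicit Defensive.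
Import Order.TTheory GRing.Theory Num.Theory.
Local Open Scope ring_scope.

Section Defs.
Variables (R : realFieldType) (K T1 T2 : finType).

Definition marg1 (lam : T1 -> T2 -> R) (t1 : T1) : R := \sum_(t2 : T2) lam t1 t2.
Definition marg2 (lam : T1 -> T2 -> R) (t2 : T2) : R := \sum_(t1 : T1) lam t1 t2.

Definition Qext {Ti : finType} (k0 : K) (Q : K -> Ti -> R) (k : K) (t : Ti) : R :=
  if k == k0 then 1 - \sum_(k' | k' != k0) Q k' t else Q k t.

Definition h1 (k0 : K) (Q1 : K -> T1 -> R) (lam : T1 -> T2 -> R) (k : K) (t1 : T1) : R :=
  Qext k0 Q1 k t1 * marg1 lam t1.
Definition h2 (k0 : K) (Q2 : K -> T2 -> R) (lam : T1 -> T2 -> R) (k : K) (t2 : T2) : R :=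
  Qext k0 Q2 k t2 * marg2 lam t2.

Definition PI_feasible (k0 : K) (Q1 : K -> T1 -> R) (Q2 : K -> T2 -> R)
    (lam : T1 -> T2 -> R) : Prop :=
  exists x : K -> T1 -> T2 -> R,
    [/\ forall k t1 t2, 0 <= x k t1 t2,
        forall k, k != k0 -> forall t1, \sum_(t2 : T2) x k t1 t2 = h1 k0 Q1 lam k t1,
        forall k, k != k0 -> forall t2, \sum_(t1 : T1) x k t1 t2 = h2 k0 Q2 lam k t2
      & forall t1 t2, \sum_(k : K) x k t1 t2 = lam t1 t2].

Definition Pa_feasible (k0 : K) (Q1 : K -> T1 -> R) (Q2 : K -> T2 -> R)
    (lam : T1 -> T2 -> R) (ta tb : T1) : Prop :=
  exists x : K -> T1 -> T2 -> R,
    [/\ forall k t1 t2, 0 <= x k t1 t2,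
        forall k t2, \sum_(t1 : T1) x k t1 t2 = h2 k0 Q2 lam k t2,
        forall k, \sum_(t2 : T2) x k tb t2 = h1 k0 Q1 lam k tb
      & forall t2, \sum_(k : K) x k ta t2 = lam ta t2].

(* Network flow on the bipartite graph: supply nodes (k,t2), demand nodes
   (k,tb) and (ta,t2); fb k t2 = flow on arc (k,t2)->(k,tb),
   fa k t2 = flow on arc (k,t2)->(ta,t2). *)
Definition flow_feasible (k0 : K) (Q1 : K -> T1 -> R) (Q2 : K -> T2 -> R)
    (lam : T1 -> T2 -> R) (ta tb : T1) : Prop :=
  exists fa fb : K -> T2 -> R,
    [/\ forall k t2, 0 <= fa k t2 /\ 0 <= fb k t2,
        forall k t2, fb k t2 + fa k t2 = h2 k0 Q2 lam k t2,
        forall k, \sum_(t2 : T2) fb k t2 = h1 k0 Q1 lam k tb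
      & forall t2, \sum_(k : K) fa k t2 = lam ta t2].

End Defs.

(* Main.v *)
Require Import Defs.
From mathcomp Require Import all_boot all_order all_algebra.
Import Order.TTheory GRing.Theory Num.Theory.
Local Open Scope ring_scope.

Lemma sumT1 (R : realFieldType) (T1 : finType) (ta tb : T1) (F : T1 -> R) :
  ta != tb -> (forall t, t = ta \/ t = tb) -> \sum_t F t = F ta + F tb.
Proof.
move=> nab hT; rewrite (bigD1 ta) //= (bigD1 tb) 1?eq_sym //= big1 ?addr0 //.
by move=> t /andP[h1 h2]; case: (hT t) => ht; rewrite ht eqxx in h1 h2.
Qed.

Arguments sumT1 {R T1 ta tb F}.

Lemma sumQext (R : realFieldType) (K Ti : finType) (k0 : K) (Q : K -> Ti -> R) t :
  \sum_k Qext k0 Q k t = 1.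
Proof.
rewrite (bigD1 k0) //= /Qext eqxx.
rewrite (eq_bigr (fun k => Q k t)); last by move=> k /negbTE ->.
by rewrite subrK.
Qed.

Lemma fix_k0 (R : realFieldType) (K : finType) (k0 : K) (G H : K -> R) :
  \sum_k G k = \sum_k H k -> (forall k, k != k0 -> G k = H k) -> G k0 = H k0.
Proof.
move=> E hk; move: E; rewrite (bigD1 k0) //= [in RHS](bigD1 k0) //=.
by rewrite (eq_bigr _ hk) => /addIr.
Qed.

Theorem lemma7 (R : realFieldType) (K T1 T2 : finType) (k0 : K) (ta tb : T1)
    (lam : T1 -> T2 -> R) (Q1 : K -> T1 -> R) (Q2 : K -> T2 -> R) :
  ta != tb ->
  (forall t1 : T1, t1 = ta \/ t1 = tb) ->
  (forall t1 t2, 0 < lam t1 t2) ->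
  \sum_(t1 : T1) \sum_(t2 : T2) lam t1 t2 = 1 ->
  (forall t1 t2, lam t1 t2 = marg1 lam t1 * marg2 lam t2) ->
  (forall k, k != k0 ->
     \sum_(t1 : T1) h1 k0 Q1 lam k t1 = \sum_(t2 : T2) h2 k0 Q2 lam k t2) ->
  (PI_feasible k0 Q1 Q2 lam <-> Pa_feasible k0 Q1 Q2 lam ta tb) /\
  (Pa_feasible k0 Q1 Q2 lam ta tb <-> flow_feasible k0 Q1 Q2 lam ta tb).
Proof.
move=> nab hT _ _ _ hsum.
have Eh2 t2 : \sum_k h2 k0 Q2 lam k t2 = marg2 lam t2.
  by rewrite /h2 -big_distrl /= sumQext mul1r.
have Eh1 t1 : \sum_k h1 k0 Q1 lam k t1 = marg1 lam t1.
  by rewrite /h1 -big_distrl /= sumQext mul1r.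
split; split.
- case=> x [x0 hr hc hl]; exists x; split => //.
  + move=> k t2; case: (eqVneq k k0) => [->|nk]; last exact: hc.
    apply: (@fix_k0 _ _ k0 (fun k => \sum_t1 x k t1 t2) (fun k => h2 k0 Q2 lam k t2) _ _); last by move=> k1 nk1; apply: hc.
    rewrite Eh2 exchange_big /marg2; apply: eq_bigr => t1 _; exact: hl.
  + move=> k; case: (eqVneq k k0) => [->|nk]; last exact: hr.
    apply: (@fix_k0 _ _ k0 (fun k => \sum_t2 x k tb t2) (fun k => h1 k0 Q1 lam k tb) _ _); last by move=> k' nk'; apply: hr.
    rewrite Eh1 exchange_big /marg1; apply: eq_bigr => t2 _; exact: hl.
- case=> x [x0 hc hr hl]; exists x; split => //.
  + move=> k nk t1; case: (hT t1) => ->; last exact: hr.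
    have := hsum k nk; rewrite (eq_bigr _ (fun t2 _ => esym (hc k t2))) exchange_big /=.
    rewrite !(sumT1 nab hT) hr => /addIr; done.
  + move=> t1 t2; case: (hT t1) => ->; first exact: hl.
    have := Eh2 t2; rewrite (eq_bigr _ (fun k _ => esym (hc k t2))) /marg2.
    rewrite (eq_bigr (fun k => x k ta t2 + x k tb t2)); last by move=> k _; rewrite (sumT1 nab hT).
    by rewrite big_split /= (sumT1 nab hT) hl => /addrI.
- case=> x [x0 hc hr hl]; exists (fun k t2 => x k ta t2), (fun k t2 => x k tb t2); split => //.
  by move=> k t2; rewrite -hc (sumT1 nab hT) addrC.
- case=> fa [fb [f0 hc hr hl]].
  exists (fun k t1 t2 => if t1 == ta then fa k t2 else fb k t2); split.
  + by move=> k t1 t2; case: (t1 == ta); case: (f0 k t2).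
  + by move=> k t2; rewrite (sumT1 nab hT) eqxx eq_sym (negbTE nab) addrC.
  + by move=> k; rewrite eq_sym (negbTE nab).
  + by move=> t2; rewrite eqxx.
Qed.
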